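(* Let $\mathbf X\in\mathscr C^p_\omega([0,T],\mathcal M)$. (1) If $\boldsymbol H\in\mathscr D_X(\mathbb R^{e\times d})$ satisfies $\boldsymbol H=\boldsymbol H\cdot\boldsymbol Q(X)$, then $\int\boldsymbol H\,d_{\mathcal M}\mathbf X=0$ as a rough path. (2) Consequently, if $\boldsymbol H,\boldsymbol K\in\mathscr D_X(\mathbb R^{e\times d})$ satisfy $\boldsymbol K-\boldsymbol H=(\boldsymbol K-\boldsymbol H)\cdot\boldsymbol Q(X)$, then $\int\boldsymbol H\,d_{\mathcal M}\mathbf X=\int\boldsymbol K\,d_{\mathcal M}\mathbf X$ as rough paths.
   Context: Let $\mathcal M\subseteq\mathbb R^d$ be an embedded smooth submanifold, $\Pi$ the nearest-point (Riemannian) projection onto $\mathcal M$, defined and smooth on a tubular neighbourhood $A$ of $\mathcal M$ (so $\Pi\circ\Pi=\Pi$, $\Pi|_{\mathcal M}=\mathrm{id}$). Set $P:=D\Pi$ and $Q:=I_d-D\Pi$ on $A$; for $y\in\mathcal M$, $P(y)$ and $Q(y)$ are the orthogonal projections onto the tangent and normal spaces. Fix $p\in[1,3)$ and a control $\omega$. Euclidean rough paths $\mathbf X=(X,\mathbb X)$ ($|X_{st}|\lesssim\omega^{1/p}$, $|\mathbb X_{st}|\lesssim\omega^{2/p}$, Chen's identity $\mathbb X^{ab}_{st}=\mathbb X^{ab}_{su}+X^a_{su}X^b_{ut}+\mathbb X^{ab}_{ut}$); controlled paths $(H,H')$ with $H_{st}-H'_sX_{st}=O(\omega^{2/p})$,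 matrix-valued ones with differentiation index first (for $\boldsymbol H\in\mathscr D_X(\mathbb R^{e\times d})$: trace $H_b$, derivative $H'_{ab}$); rough integral $\int\boldsymbol H\,d\mathbf X=\lim\sum H_{c;u}X^c_{uv}+H'_{ab;u}\mathbb X^{ab}_{uv}$, viewed as rough path via the lift with second order part $\approx H^i_{a;s}H^j_{b;s}\mathbb X^{ab}_{st}$ ($\approx$ = up to $o(\omega(s,t))$). Pushforward $\Pi_*\mathbf X$: rough path with trace $\Pi(X)$ and second order part $\approx\partial_a\Pi^c\partial_b\Pi^d(X_s)\mathbb X^{ab}_{st}$. $\mathscr C^p_\omega([0,T],\mathcal M)$ is the set of rough paths with trace in $\mathcal M$ and $\Pi_*\mathbf X=\mathbf X$. Pullback: $\Pi^*\boldsymbol H=(H_c\partial_b\Pi^c(X),\,H'_{ij}\partial_a\Pi^i\partial_b\Pi^j(X)+H_c\partial_{ab}\Pi^c(X))$. Constrained rough integral: $\int\boldsymbol H\,d_{\mathcal M}\mathbf X:=\int\Pi^*\boldsymbol H\,d\mathbf X$. $\boldsymbol Q(X)$ is the $X$-controlled path $(Q^c_b(X),\partial_aQ^c_b(X))=(Q^c_b(X),-\partial_{ab}\Pi^c(X))$, and the Leibniz product is $\boldsymbol H\cdot\boldsymbol Q(X)=(H_cQ^c_b(X),\,H'_{ac}Q^c_b(X)+H_c\partial_aQ^c_b(X))$. *)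

(* Defs.v *)
From HB Require Import structures.
From mathcomp Require Import all_boot all_order all_algebra.
From mathcomp Require Import all_classical all_reals all_analysis.
Set Implicit Arguments. Unset Strict Implicit. Unset Printing Implicit Defensive.
Import Order.TTheory GRing.Theory Num.Theory.
Import numFieldNormedType.Exports.
Local Open Scope classical_set_scope.
Local Open Scope ring_scope.

Section Defs.
Variable R : realType.

Definition evec (d : nat) (a : 'I_d) : 'cV[R]_d := delta_mx a 0.

Definition eucl2 (d : nat) (x : 'cV[R]_d) : R := \sum_(i < d) x i 0 ^+ 2.

Definition jac (d m : nat) (F : 'cV[R]_d -> 'cV[R]_m) (x : 'cV[R]_d)
  : 'M[R]_(m, d) := \matrix_(i, a) ('D_(evec a) F x) i 0.

Fixpoint Ck_on (k d m : nat) (A : set 'cV[R]_d) (F : 'cV[R]_d -> 'cV[R]_m)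
  : Prop :=
  match k with
  | 0 => {in A, continuous F}
  | k'.+1 => (forall x, A x -> differentiable F x) /\
             (forall a : 'I_d, Ck_on k' A (fun y => 'D_(evec a) F y))
  end.

Definition smooth_on (d m : nat) (A : set 'cV[R]_d) (F : 'cV[R]_d -> 'cV[R]_m)
  := forall k, Ck_on k A F.

(* embedded smooth submanifold of R^d (of some dimension k), via local
   regular defining equations *)
Definition embedded_submanifold (d : nat) (M : set 'cV[R]_d) : Prop :=
  exists k : nat, (k <= d)%N /\
  forall y, M y -> exists (U : set 'cV[R]_d) (F : 'cV[R]_d -> 'cV[R]_(d - k)),
    [/\ open U, U y, smooth_on U F,
        (forall x, U x -> \rank (jac F x) = (d - k)%N) &
        (forall x, U x -> (M x <-> F x = 0))].

(* Pi is the nearest-point projection onto M, defined (with a unique nearest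
   point) and smooth on the tubular neighbourhood A of M *)
Definition nearest_point_projection (d : nat) (M A : set 'cV[R]_d)
  (Pi : 'cV[R]_d -> 'cV[R]_d) : Prop :=
  [/\ open A, M `<=` A, smooth_on A Pi &
      forall x, A x ->
        [/\ M (Pi x),
            (forall y, M y -> eucl2 (x - Pi x) <= eucl2 (x - y)) &
            (forall y, M y -> eucl2 (x - y) = eucl2 (x - Pi x) -> y = Pi x)]].

Definition DPi (d : nat) (Pi : 'cV[R]_d -> 'cV[R]_d) (x : 'cV[R]_d) : 'M[R]_d :=
  jac Pi x.
Definition D2Pi (d : nat) (Pi : 'cV[R]_d -> 'cV[R]_d) (x : 'cV[R]_d)
  (a b : 'I_d) : 'cV[R]_d :=
  'D_(evec a) (fun y => 'D_(evec b) Pi y) x.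
Definition Qmx (d : nat) (Pi : 'cV[R]_d -> 'cV[R]_d) (x : 'cV[R]_d) : 'M[R]_d :=
  1%:M - DPi Pi x.
(* derivative part of Q(X): (dQ x a) entry (c,b) = d_a Q^c_b = - d_ab Pi^c *)
Definition dQmx (d : nat) (Pi : 'cV[R]_d -> 'cV[R]_d) (x : 'cV[R]_d)
  (a : 'I_d) : 'M[R]_d :=
  \matrix_(c, b) - (D2Pi Pi x a b) c 0.

Definition in_simplex (T s t : R) := 0 <= s /\ s <= t /\ t <= T.

Definition control (T : R) (w : R -> R -> R) : Prop :=
  [/\ (forall s t, in_simplex T s t -> 0 <= w s t),
      (forall t, 0 <= t <= T -> w t t = 0),
      (forall s u t, 0 <= s -> s <= u -> u <= t -> t <= T ->
          w s u + w u t <= w s t) &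
      {within [set st : R * R | in_simplex T st.1 st.2],
         continuous (fun st : R * R => w st.1 st.2)}].

Definition little_o_w (m n : nat) (T : R) (w : R -> R -> R)
  (f : R -> R -> 'M[R]_(m, n)) : Prop :=
  forall eps : R, 0 < eps -> exists2 delta : R, 0 < delta &
    forall s t, in_simplex T s t -> t - s < delta -> `|f s t| <= eps * w s t.

Definition rough_path (n : nat) (T p : R) (w : R -> R -> R)
  (Z : R -> 'cV[R]_n) (ZZ : R -> R -> 'M[R]_n) : Prop :=
  (exists C : R, forall s t, in_simplex T s t ->
     `|Z t - Z s| <= C * w s t `^ p^-1 /\
     `|ZZ s t| <= C * w s t `^ (2 / p)) /\
  (forall s u t, 0 <= s -> s <= u -> u <= t -> t <= T ->
     ZZ s t = ZZ s u + (Z u - Z s) *m (Z t - Z u)^T + ZZ u t).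

Definition is_pushforward (d : nat) (T p : R) (w : R -> R -> R)
  (Pi : 'cV[R]_d -> 'cV[R]_d) (X : R -> 'cV[R]_d) (XX : R -> R -> 'M[R]_d)
  (Y : R -> 'cV[R]_d) (YY : R -> R -> 'M[R]_d) : Prop :=
  [/\ rough_path T p w Y YY,
      (forall t, 0 <= t <= T -> Y t = Pi (X t)) &
      little_o_w T w (fun s t =>
         YY s t - DPi Pi (X s) *m XX s t *m (DPi Pi (X s))^T)].

Definition manifold_rough_path (d : nat) (T p : R) (w : R -> R -> R)
  (M : set 'cV[R]_d) (Pi : 'cV[R]_d -> 'cV[R]_d)
  (X : R -> 'cV[R]_d) (XX : R -> R -> 'M[R]_d) : Prop :=
  [/\ rough_path T p w X XX,
      (forall t, 0 <= t <= T -> M (X t)) &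
      is_pushforward T p w Pi X XX X XX].

(* (H, H') in D_X(R^{e x d}); H t : e x d matrix (entry (i,b) = H^i_b),
   H' t a : e x d matrix (entry (i,b) = H'^i_{ab}), derivative index first *)
Definition controlled (d e : nat) (T p : R) (w : R -> R -> R)
  (X : R -> 'cV[R]_d) (H : R -> 'M[R]_(e, d)) (H' : R -> 'I_d -> 'M[R]_(e, d))
  : Prop :=
  exists C : R, forall s t, in_simplex T s t ->
    (forall a, `|H' t a - H' s a| <= C * w s t `^ p^-1) /\
    `|H t - H s - \sum_(a < d) (X t - X s) a 0 *: H' s a|
        <= C * w s t `^ (2 / p).

Definition leibnizQ_trace (d e : nat) (Pi : 'cV[R]_d -> 'cV[R]_d)
  (X : R -> 'cV[R]_d) (H : R -> 'M[R]_(e, d)) : R -> 'M[R]_(e, d) :=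
  fun t => H t *m Qmx Pi (X t).
Definition leibnizQ_deriv (d e : nat) (Pi : 'cV[R]_d -> 'cV[R]_d)
  (X : R -> 'cV[R]_d) (H : R -> 'M[R]_(e, d)) (H' : R -> 'I_d -> 'M[R]_(e, d))
  : R -> 'I_d -> 'M[R]_(e, d) :=
  fun t a => H' t a *m Qmx Pi (X t) + H t *m dQmx Pi (X t) a.

Definition pullback_trace (d e : nat) (Pi : 'cV[R]_d -> 'cV[R]_d)
  (X : R -> 'cV[R]_d) (H : R -> 'M[R]_(e, d)) : R -> 'M[R]_(e, d) :=
  fun t => H t *m DPi Pi (X t).
Definition pullback_deriv (d e : nat) (Pi : 'cV[R]_d -> 'cV[R]_d)
  (X : R -> 'cV[R]_d) (H : R -> 'M[R]_(e, d)) (H' : R -> 'I_d -> 'M[R]_(e, d))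
  : R -> 'I_d -> 'M[R]_(e, d) :=
  fun t a => \matrix_(k, b)
    ((\sum_(i < d) \sum_(j < d)
        H' t i k j * DPi Pi (X t) i a * DPi Pi (X t) j b)
     + \sum_(c < d) H t k c * (D2Pi Pi (X t) a b) c 0).

Definition rough_germ (d e : nat) (X : R -> 'cV[R]_d) (XX : R -> R -> 'M[R]_d)
  (H : R -> 'M[R]_(e, d)) (H' : R -> 'I_d -> 'M[R]_(e, d)) (u v : R)
  : 'cV[R]_e :=
  H u *m (X v - X u) +
  \sum_(a < d) \sum_(b < d) XX u v a b *: col b (H' u a).

(* partitions s = u_0 < u_1 < ... < u_n = t, given as s and [:: u_1; ..; u_n] *)
Definition is_partition (s t : R) (l : seq R) : Prop :=
  path <%R s l /\ last s l = t.
Definition mesh (s : R) (l : seq R) : R :=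
  \big[Num.max/0]_(uv <- zip (s :: l) l) (uv.2 - uv.1).
Definition riemann_sum (e : nat) (g : R -> R -> 'cV[R]_e) (s : R) (l : seq R)
  : 'cV[R]_e := \sum_(uv <- zip (s :: l) l) g uv.1 uv.2.

Definition is_rough_integral (d e : nat) (T p : R) (w : R -> R -> R)
  (X : R -> 'cV[R]_d) (XX : R -> R -> 'M[R]_d)
  (H : R -> 'M[R]_(e, d)) (H' : R -> 'I_d -> 'M[R]_(e, d))
  (Z : R -> 'cV[R]_e) (ZZ : R -> R -> 'M[R]_e) : Prop :=
  [/\ rough_path T p w Z ZZ, Z 0 = 0,
      (forall s t, in_simplex T s t ->
         forall eps : R, 0 < eps -> exists2 delta : R, 0 < delta &
           forall l, is_partition s t l -> mesh s l < delta ->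
             `|riemann_sum (rough_germ X XX H H') s l - (Z t - Z s)| < eps) &
      little_o_w T w (fun s t => ZZ s t - H s *m XX s t *m (H s)^T)].

Definition is_constrained_rough_integral (d e : nat) (T p : R)
  (w : R -> R -> R) (Pi : 'cV[R]_d -> 'cV[R]_d)
  (X : R -> 'cV[R]_d) (XX : R -> R -> 'M[R]_d)
  (H : R -> 'M[R]_(e, d)) (H' : R -> 'I_d -> 'M[R]_(e, d))
  (Z : R -> 'cV[R]_e) (ZZ : R -> R -> 'M[R]_e) : Prop :=
  is_rough_integral T p w X XX (pullback_trace Pi X H)
    (pullback_deriv Pi X H H') Z ZZ.

End Defs.

(* Main.v *)
Require Import Defs.
From HB Require Import structures.
From mathcomp Require Import all_boot all_order all_algebra.
From mathcomp Require Import all_classical all_reals all_analysis.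
From mathcomp Require Import lra.
Import Order.TTheory GRing.Theory Num.Theory.
Import numFieldNormedType.Exports.
Local Open Scope classical_set_scope.
Local Open Scope ring_scope.
Set Implicit Arguments. Unset Strict Implicit.
Lemma derive_near (R : realType) (V W : normedModType R) (f g : V -> W) a v :
  derivable f a v -> (\forall x \near a, f x = g x) -> 'D_v g a = 'D_v f a.
Proof.
move=> df fg; apply: cvg_lim => //.
apply: cvg_trans df; apply: near_eq_cvg.
have ga : f a = g a by exact: (nbhs_singleton fg).
have : \forall h \near (0:R), f (h *: v + a) = g (h *: v + a).
  have cont : {for 0, continuous (fun h : R => h *: v + a)}.
    by apply: continuousD; [apply: continuousZl| apply: cst_continuous].
  have fg' : \forall x \near (0:R) *: v + a, f x = g x by rewrite scale0r add0r.
  exact: (cont _ fg').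
move=> H; near=> h => /=.
rewrite /shift /= ga; congr (_ *: (_ - _)).
near: h; exact: (nbhs_dnbhs H).
Unshelve. all: by end_near. Qed.

Lemma derive_coord (R : realType) (V : normedModType R) m n
  (f : V -> 'M[R]_(m, n)) x v i j :
  derivable f x v -> 'D_v (fun z => f z i j) x = ('D_v f x) i j.
Proof.
move=> df; apply: cvg_lim => //.
have := cvg_comp _ _ df ((@coord_continuous R m n i j) ('D_v f x)).
apply: cvg_trans; apply: near_eq_cvg; near=> h => /=.
by rewrite !mxE.
Unshelve. all: by end_near. Qed.

Lemma derivable_coord (R : realType) (V : normedModType R) m n
  (f : V -> 'M[R]_(m, n)) x v i j :
  derivable f x v -> derivable (fun z => f z i j) x v.
Proof.
move=> df; apply/cvg_ex; exists (('D_v f x) i j).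
have := cvg_comp _ _ df ((@coord_continuous R m n i j) ('D_v f x)).
apply: cvg_trans; apply: near_eq_cvg; near=> h => /=.
by rewrite !mxE.
Unshelve. all: by end_near. Qed.

Lemma cV_decomp (R : realType) d (w : 'cV[R]_d) :
  w = \sum_(i < d) w i 0 *: evec R i.
Proof.
apply/matrixP => c j; rewrite (ord1 j) summxE.
rewrite (bigD1 c) //= big1 ?addr0.
  by rewrite !mxE eqxx /= mulr1.
by move=> i ic; rewrite !mxE eq_sym (negbTE ic) /= mulr0.
Qed.

Lemma diff_decG (R : realType) d (g : 'cV[R]_d -> 'cV[R]_d) z w :
  differentiable g z ->
  'd g z w = \sum_(i < d) w i 0 *: 'D_(evec R i) g z.
Proof.
move=> dz; rewrite {1}(cV_decomp w) linear_sum; apply: eq_bigr => i _.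
by rewrite linearZ /= (@deriveE R _ _ g z _ dz).
Qed.

Section Geom.
Variables (R : realType) (d : nat) (Pi : 'cV[R]_d -> 'cV[R]_d)
  (A : set 'cV[R]_d).
Hypotheses (oA : open A) (dPi : forall x, A x -> differentiable Pi x)
  (dD : forall (a : 'I_d) x, A x -> differentiable (fun z => 'D_(evec R a) Pi z) x)
  (APi : forall x, A x -> A (Pi x))
  (PP : forall x, A x -> Pi (Pi x) = Pi x).

Lemma nearA x : A x -> \forall z \near x, A z.
Proof. by move=> Ax; apply: open_nbhs_nbhs; split. Qed.

Lemma diff_dec z w : differentiable Pi z ->
  'd Pi z w = \sum_(i < d) w i 0 *: 'D_(evec R i) Pi z.
Proof.
move=> dz; rewrite {1}(cV_decomp w) linear_sum; apply: eq_bigr => i _.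
by rewrite linearZ /= deriveE.
Qed.

Lemma chainPi x v : A x ->
  'D_v Pi x = \sum_(i < d) ('D_v Pi x) i 0 *: 'D_(evec R i) Pi (Pi x).
Proof.
move=> Ax.
have dx := dPi Ax.
have dPx := dPi (APi Ax).
have E1 : 'D_v Pi x = 'D_v (Pi \o Pi) x.
  apply/esym; apply: derive_near.
    exact: diff_derivable dx.
  near=> z. rewrite /=. rewrite PP //. near: z. exact: nearA.
have dc : differentiable (Pi \o Pi) x.
  apply: differentiable_comp. exact: dx. exact: dPx.
have E2 : 'D_v (Pi \o Pi) x = 'd Pi (Pi x) ('d Pi x v).
  have := @deriveE R _ _ (Pi \o Pi) x v dc. move=> ->.
  have h := @diff_comp R _ _ _ Pi Pi x dx dPx.
  exact: (congr1 (fun F => F v) h).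
rewrite {1}E1 E2 (diff_dec _ dPx).
by apply: eq_bigr => i _; rewrite (@deriveE R _ _ Pi x v dx).
Unshelve. all: by end_near. Qed.

Lemma G1 y : A y -> Pi y = y -> DPi Pi y *m DPi Pi y = DPi Pi y.
Proof.
move=> Ay Py; apply/matrixP => c b.
rewrite [RHS]mxE (chainPi (evec R b) Ay) Py summxE !mxE.
by apply: eq_bigr => i _; rewrite !mxE mulrC.
Qed.

Lemma G2 y (a b c : 'I_d) : A y -> Pi y = y ->
  (D2Pi Pi y a b) c 0 =
  \sum_(i < d) DPi Pi y c i * (D2Pi Pi y a b) i 0 +
  \sum_(i < d) \sum_(j < d)
     DPi Pi y i b * DPi Pi y j a * (D2Pi Pi y j i) c 0.
Proof.
move=> Ay Py.
pose Fb := fun z => 'D_(evec R b) Pi z.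
pose h := fun (i : 'I_d) (z : 'cV[R]_d) =>
  Fb z i 0 * ('D_(evec R i) Pi (Pi z)) c 0.
have dPiy := dPi Ay.
have dgi : forall i : 'I_d, derivable (fun z => ('D_(evec R i) Pi (Pi z)) c 0) y (evec R a).
  move=> i; apply: (@derivable_coord R _ d 1 (fun z => 'D_(evec R i) Pi (Pi z))).
  have dc : differentiable ('D_(evec R i) Pi \o Pi) y.
    apply: differentiable_comp; first exact: dPiy.
    by rewrite Py; exact: dD.
  exact: diff_derivable dc.
have dfi : forall i : 'I_d, derivable (fun z => Fb z i 0) y (evec R a).
  by move=> i; apply: (@derivable_coord R _ d 1 Fb); exact: diff_derivable (dD b Ay).
have dh : forall i, derivable (h i) y (evec R a).
  by move=> i; apply: derivableM.
have E : (D2Pi Pi y a b) c 0 = 'D_(evec R a) (\sum_(i < d) h i) y.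
  rewrite /D2Pi -derive_coord; last exact: diff_derivable (dD b Ay).
  apply: (@derive_near R _ _ (\sum_(i < d) h i)); first exact: derivable_sum.
  near=> z; rewrite fct_sumE /h /Fb.
  have Az : A z by near: z; exact: nearA.
  rewrite [in RHS](chainPi (evec R b) Az) summxE.
  by apply: eq_bigr => i _; rewrite !mxE.
transitivity ('D_(evec R a) (\sum_(i < d) h i) y); first exact: E.
have E2 := (@derive_sum R _ _ d h y (evec R a) dh).
transitivity (\sum_(i < d) 'D_(evec R a) (h i) y); first exact: E2.
have Ti : forall i, 'D_(evec R a) (h i) y =
   DPi Pi y i b * (\sum_(j < d) DPi Pi y j a * (D2Pi Pi y j i) c 0) +
   DPi Pi y c i * (D2Pi Pi y a b) i 0.
  move=> i.
  have hE : h i = (fun z => Fb z i 0) * (fun z => ('D_(evec R i) Pi (Pi z)) c 0).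
    by [].
  have dc : differentiable ('D_(evec R i) Pi \o Pi) y.
    apply: differentiable_comp; first exact: dPiy.
    by rewrite Py; exact: dD.
  have Df : 'D_(evec R a) (fun z => Fb z i 0) y = (D2Pi Pi y a b) i 0.
    by rewrite (@derive_coord R _ d 1 Fb y (evec R a) i 0 (diff_derivable (dD b Ay))).
  have Dg : 'D_(evec R a) (fun z => ('D_(evec R i) Pi (Pi z)) c 0) y =
      \sum_(j < d) DPi Pi y j a * (D2Pi Pi y j i) c 0.
    rewrite (@derive_coord R _ d 1 ('D_(evec R i) Pi \o Pi) y (evec R a) c 0 (diff_derivable dc)).
    rewrite (@deriveE R _ _ _ y (evec R a) dc).
    have h2 := @diff_comp R _ _ _ Pi ('D_(evec R i) Pi) y dPiy (dD i (APi Ay)).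
    have h3 := congr1 (fun F : 'cV[R]_d -> 'cV[R]_d => F (evec R a) c 0) h2.
    transitivity (('d ('D_(evec R i) Pi) (Pi y) ('d Pi y (evec R a))) c 0);
      first exact: h3.
    have e1 := @deriveE R _ _ Pi y (evec R a) dPiy.
    have e2 := congr1 (fun w : 'cV[R]_d => 'd ('D_(evec R i) Pi) (Pi y) w c 0) e1.
    simpl in e2.
    transitivity ('d ('D_(evec R i) Pi) (Pi y) ('D_(evec R a) Pi y) c 0);
      first exact: (esym e2).
    have k1 := @diff_decG R d ('D_(evec R i) Pi) y ('D_(evec R a) Pi y) (dD i Ay).
    have k2 := congr1 (fun w : 'cV[R]_d => w c 0) k1.
    simpl in k2.
    move: k2; rewrite Py => ->.

    rewrite summxE.
    by apply: eq_bigr => j _; rewrite !mxE.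
  have DM := deriveM (dfi i) (dgi i).
  transitivity ('D_(evec R a) ((fun z => Fb z i 0) *
     (fun z => ('D_(evec R i) Pi (Pi z)) c 0)) y); first by [].
  rewrite DM Df Dg.
  by rewrite /Fb Py /DPi /jac !mxE.
rewrite (eq_bigr _ (fun i _ => Ti i)) big_split /= addrC; congr (_ + _).
apply: eq_bigr => i _; rewrite big_distrr; apply: eq_bigr => j _.
by rewrite /= mulrA.
Unshelve. all: by end_near. Qed.
End Geom.

Section Alg.
Variables (R : comNzRingType) (d e : nat) (P : 'M[R]_d)
  (D : 'I_d -> 'I_d -> 'cV[R]_d) (Hm : 'M[R]_(e, d)) (Hp : 'I_d -> 'M[R]_(e, d)).
Hypotheses (G1 : P *m P = P)
  (G2 : forall a b c, D a b c 0 = \sum_(i < d) P c i * D a b i 0 +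
     \sum_(i < d) \sum_(j < d) P i b * P j a * D j i c 0)
  (hH : Hm = Hm *m (1%:M - P))
  (hH' : forall a, Hp a = Hp a *m (1%:M - P) + Hm *m (\matrix_(c, b) - D a b c 0)).

Let S a b c := \sum_(i < d) \sum_(j < d) P i b * P j a * D j i c 0.

Lemma HP0 : Hm *m P = 0.
Proof.
have -> : Hm *m P = Hm - Hm *m (1%:M - P).
  by rewrite mulmxBr mulmx1 opprB addrC subrK.
by rewrite -hH subrr.
Qed.

Lemma HpP a : Hp a *m P = Hm *m (\matrix_(c, b) - D a b c 0).
Proof.
have -> : Hp a *m P = Hp a - Hp a *m (1%:M - P).
  by rewrite mulmxBr mulmx1 opprB addrC subrK.
by rewrite {1}hH' addrAC subrr add0r.
Qed.

Lemma hp0 k m : \sum_(c < d) Hm k c * P c m = 0.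
Proof. by have := congr1 (fun M : 'M[R]_(e,d) => M k m) HP0; rewrite !mxE. Qed.

Lemma hS k a b : \sum_(c < d) Hm k c * D a b c 0 = \sum_(c < d) Hm k c * S a b c.
Proof.
under eq_bigr do rewrite G2 mulrDr.
rewrite big_split /= -[RHS]add0r; congr (_ + _).
under eq_bigr do rewrite big_distrr.
rewrite exchange_big /=; apply: big1 => m _.
under eq_bigr do rewrite mulrA.
by rewrite -big_distrl /= hp0 mul0r.
Qed.

Lemma PS a b c : \sum_(i < d) P i a * S i b c = S a b c.
Proof.
rewrite /S.
under eq_bigr do rewrite big_distrr.
rewrite exchange_big; apply: eq_bigr => i' _.
under eq_bigr do rewrite big_distrr.
rewrite exchange_big; apply: eq_bigr => j _ /=.
have -> : P j a = \sum_(i < d) P j i * P i a.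
  by have := congr1 (fun M : 'M[R]_d => M j a) G1; rewrite !mxE => <-.
rewrite mulr_sumr big_distrl; apply: eq_bigr => i _ /=.
by rewrite /= mulrA; rewrite [P i a * _]mulrC; rewrite ![in RHS]mulrA;
   rewrite -[P i' b * P j i * P i a]mulrA [P j i * P i a]mulrC.
Qed.

Lemma alg_deriv a :
  \matrix_(k, b) ((\sum_(i < d) \sum_(j < d) Hp i k j * P i a * P j b)
     + \sum_(c < d) Hm k c * D a b c 0) = 0 :> 'M[R]_(e, d).
Proof.
apply/matrixP => k b; rewrite !mxE.
have E1 : \sum_(i < d) \sum_(j < d) Hp i k j * P i a * P j b =
   - \sum_(i < d) P i a * \sum_(c < d) Hm k c * D i b c 0.
  rewrite -sumrN; apply: eq_bigr => i _.
  have := congr1 (fun M : 'M[R]_(e,d) => M k b) (HpP i); rewrite !mxE => h.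
  have -> : \sum_(j < d) Hp i k j * P i a * P j b = P i a * \sum_(j < d) Hp i k j * P j b.
    rewrite big_distrr; apply: eq_bigr => j _ /=.
    by rewrite mulrCA mulrA.
  rewrite h -mulrN -sumrN; congr (_ * _); apply: eq_bigr => c _.
  by rewrite !mxE mulrN.
rewrite E1 hS.
under eq_bigr do rewrite hS.
rewrite addrC; apply/eqP; rewrite subr_eq0; apply/eqP.
under [in RHS]eq_bigr do rewrite big_distrr.
rewrite [in RHS]exchange_big; apply: eq_bigr => c _ /=.
rewrite -(PS a b c) big_distrr; apply: eq_bigr => i _ /=.
by rewrite mulrCA.
Qed.
End Alg.

Section Ana.
Variable R : realType.

Lemma path_last (l : seq R) u : path <%R u l -> u <= last u l.
Proof.
elim: l u => [|v l IH] u /=; first by move=> _; exact: lexx.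
by case/andP => uv pv; apply: le_trans (ltW uv) (IH _ pv).
Qed.

Lemma rs_eq (e : nat) (T : R) (g g' : R -> R -> 'cV[R]_e) :
  (forall u v, 0 <= u <= T -> g u v = g' u v) ->
  forall l s, 0 <= s -> path <%R s l -> last s l <= T ->
  riemann_sum g s l = riemann_sum g' s l.
Proof.
move=> gg; elim => [|u l IH] s s0 /=; first by rewrite /riemann_sum !big_nil.
case/andP => su pl lT.
rewrite /riemann_sum /= !big_cons /=.
have uT : u <= T := le_trans (path_last pl) lT.
rewrite gg; last by rewrite s0 (le_trans (ltW su) uT).
congr (_ + _); exact: IH (le_trans s0 (ltW su)) pl lT.
Qed.

Lemma rs0 (e : nat) (g : R -> R -> 'cV[R]_e) s l :
  (forall u v, g u v = 0) -> riemann_sum g s l = 0.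
Proof. by move=> h; rewrite /riemann_sum big1. Qed.

Lemma exists_n (x δ : R) : 0 < δ -> exists n : nat, x < n%:R * (δ / 2) + δ.
Proof.
move=> d0.
have d2 : 0 < δ / 2 by lra.
case: (lerP x 0) => hx.
  by exists 0%N; rewrite mul0r add0r; lra.
have hx' : 0 <= x / (δ / 2) by apply: divr_ge0; lra.
have := archi_boundP hx'.
set n := Num.Def.archi_bound _ => hn.
exists n.
have : x / (δ / 2) <= n%:R by exact: ltW.
rewrite ler_pdivrMr //; lra.
Qed.

Lemma part_exists (s t δ : R) : 0 < δ -> s <= t ->
  exists l, is_partition s t l /\ mesh s l < δ.
Proof.
move=> d0 st.
suff H : forall n : nat, forall s t : R, s <= t -> t - s < n%:R * (δ / 2) + δ ->
    exists l, is_partition s t l /\ mesh s l < δ.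
  have [n hn] := exists_n (t - s) d0.
  exact: H n s t st hn.
elim => [|n IH] s' t' st' h.
  case: (eqVneq s' t') => [<-|ne].
    by exists [::]; split; [split|rewrite /mesh /= big_nil].
  exists [:: t']; split; first by split => //=; rewrite andbT lt_neqAle ne st'.
  rewrite /mesh /= big_cons big_nil /= gt_max d0 andbT.
  by move: h; rewrite mul0r add0r.
case: (ltP (t' - s') δ) => hc.
  case: (eqVneq s' t') => [<-|ne].
    by exists [::]; split; [split|rewrite /mesh /= big_nil].
  exists [:: t']; split; first by split => //=; rewrite andbT lt_neqAle ne st'.
  by rewrite /mesh /= big_cons big_nil /= gt_max d0 andbT.
set u := s' + δ / 2.
have ut : u <= t' by rewrite /u; lra.
have hu : t' - u < n%:R * (δ / 2) + δ.
  move: h; rewrite -addn1 natrD mulrDl mul1r /u.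
  set N := n%:R * (δ / 2); lra.
have [l' [[pl' ll'] ml']] := IH u t' ut hu.
exists (u :: l'); split.
  split => //=; rewrite pl' andbT /u; lra.
rewrite /mesh /= big_cons /= gt_max ml' andbT /u; lra.
Qed.

Lemma v_small (e : nat) (v : 'cV[R]_e) :
  (forall eps : R, 0 < eps -> `|v| < eps) -> v = 0.
Proof.
move=> h; apply/eqP; rewrite -normr_le0; apply/ler_addgt0Pr => eps e0.
by rewrite add0r; exact/ltW/h.
Qed.

Lemma m_small (e : nat) (M : 'M[R]_e) (w0 : R) : 0 <= w0 ->
  (forall eps : R, 0 < eps -> `|M| <= eps * w0) -> M = 0.
Proof.
move=> w00 h; apply/eqP; rewrite -normr_le0; apply/ler_addgt0Pr => eps e0.
rewrite add0r.
have w1 : 0 < w0 + 1 by lra.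
apply: le_trans (h (eps / (w0 + 1)) (divr_gt0 e0 w1)) _.
rewrite mulrAC ler_pdivrMr //.
by apply: ler_wpM2l; [exact: ltW|lra].
Qed.


Lemma germ0 (d e : nat) (X : R -> 'cV[R]_d) (XX : R -> R -> 'M[R]_d)
  (Ht : R -> 'M[R]_(e, d)) (Ht' : R -> 'I_d -> 'M[R]_(e, d)) u v :
  Ht u = 0 -> (forall a, Ht' u a = 0) -> rough_germ X XX Ht Ht' u v = 0.
Proof.
move=> h0 h1; rewrite /rough_germ h0 mul0mx add0r big1 // => a _.
by rewrite big1 // => b _; rewrite h1 col0 scaler0.
Qed.

Lemma simp_l (T s t : R) : in_simplex T s t -> 0 <= s <= T.
Proof. by case=> s0 [st tT]; rewrite s0 (le_trans st tT). Qed.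
Lemma simp_r (T s t : R) : in_simplex T s t -> 0 <= t <= T.
Proof. by case=> s0 [st tT]; rewrite tT (le_trans s0 st). Qed.

Lemma integral_zero (d e : nat) (T p : R) (w : R -> R -> R)
  (X : R -> 'cV[R]_d) (XX : R -> R -> 'M[R]_d)
  (Ht : R -> 'M[R]_(e, d)) (Ht' : R -> 'I_d -> 'M[R]_(e, d))
  (Z : R -> 'cV[R]_e) (ZZ : R -> R -> 'M[R]_e) :
  0 <= T -> control T w ->
  (forall t, 0 <= t <= T -> Ht t = 0 /\ forall a, Ht' t a = 0) ->
  is_rough_integral T p w X XX Ht Ht' Z ZZ <->
  ((forall t, 0 <= t <= T -> Z t = 0) /\
   (forall s t, in_simplex T s t -> ZZ s t = 0)).
Proof.
move=> T0 [w0 _ wsup _] hH.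
have gz : forall u v, 0 <= u <= T ->
    rough_germ X XX Ht Ht' u v = (fun _ _ => 0 : 'cV[R]_e) u v.
  by move=> u v hu; have [h0 h1] := hH u hu; exact: germ0.
split.
  case=> [[_ chen] Z0 hrs hlo].
  have Zc : forall s t, in_simplex T s t -> Z t = Z s.
    move=> s t hst; apply/eqP; rewrite -subr_eq0; apply/eqP.
    apply: v_small => eps e0.
    have [δ δ0 hδ] := hrs s t hst eps e0.
    have st : s <= t by case: hst => _ [].
    have [l [pl ml]] := part_exists δ0 st.
    have := hδ l pl ml.
    case: pl => pth lst.
    have s0 : 0 <= s by case: hst.
    have lT : last s l <= T by rewrite lst; case: hst => _ [].
    by rewrite (rs_eq gz s0 pth lT) rs0 // sub0r normrN.
  have Zt : forall t, 0 <= t <= T -> Z t = 0.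
    move=> t /andP[t0 tT]; rewrite (Zc 0 t) //.

  split => // s t hst.
  apply: (m_small (w0 s t hst)) => eps e0.
  have [δ δ0 hδ] := hlo eps e0.
  have direct : forall s t, in_simplex T s t -> t - s < δ ->
      `|ZZ s t| <= eps * w s t.
    move=> s' t' hst' hd.
    have := hδ s' t' hst' hd.
    by have [-> _] := hH s' (simp_l hst'); rewrite mul0mx mul0mx subr0.
  suff H : forall n : nat, forall s t, in_simplex T s t ->
      t - s < n%:R * (δ / 2) + δ -> `|ZZ s t| <= eps * w s t.
    have [n hn] := exists_n (t - s) δ0.
    exact: H n s t hst hn.
  elim => [|n IH] s' t' hst' h.
    by apply: direct => //; move: h; rewrite mul0r add0r.
  case: (ltP (t' - s') δ) => hc; first exact: direct.
  case: hst' => s0 [st tT].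
  set u := s' + δ / 2.
  have su : s' <= u by rewrite /u; lra.
  have ut : u <= t' by rewrite /u; lra.
  have hu : t' - u < n%:R * (δ / 2) + δ.
    move: h; rewrite -addn1 natrD mulrDl mul1r /u.
    set N := n%:R * (δ / 2); lra.
  have hsu : in_simplex T s' u by split => //; split => //; exact: le_trans ut tT.
  have hut : in_simplex T u t' by split => //; exact: le_trans s0 su.
  rewrite (chen s' u t' s0 su ut tT).
  rewrite (Zt u) ?(Zt s') ?(simp_l hsu) ?(simp_r hsu) // subrr mul0mx addr0.
  apply: le_trans (ler_normD _ _) _.
  apply: le_trans (lerD (direct _ _ hsu _) (IH _ _ hut hu)) _.
    by rewrite /u; lra.
  by rewrite -mulrDr; apply: ler_wpM2l; [exact: ltW|exact: wsup].
case=> Zt ZZ0.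
split.
- split.
    exists 0 => s t hst.
    rewrite (Zt t (simp_r hst)) (Zt s (simp_l hst)) (ZZ0 s t hst).
    by rewrite subrr !normr0 !mul0r; split; exact: lexx.
  move=> s u t s0 su ut tT.
  have hst : in_simplex T s t by split => //; split => //; exact: le_trans su ut.
  have hsu : in_simplex T s u by split => //; split => //; exact: le_trans ut tT.
  have hut : in_simplex T u t by split => //; exact: le_trans s0 su.
  rewrite (ZZ0 _ _ hst) (ZZ0 _ _ hsu) (ZZ0 _ _ hut) (Zt u (simp_r hsu)).
  by rewrite (Zt s (simp_l hsu)) subrr mul0mx !addr0.
- by apply: Zt; rewrite lexx T0.
- move=> s t hst eps e0; exists 1 => // l [pth lst] _.
  have s0 : 0 <= s by case: hst.
  have lT : last s l <= T by rewrite lst; case: hst => _ [].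
  rewrite (rs_eq gz s0 pth lT) rs0 // (Zt t (simp_r hst)) (Zt s (simp_l hst)).
  by rewrite subrr subr0 normr0.
- move=> eps e0; exists 1 => // s t hst _.
  rewrite (ZZ0 _ _ hst); have [-> _] := hH s (simp_l hst).
  rewrite !mul0mx subr0 normr0; apply: mulr_ge0; [exact: ltW|exact: w0].
Qed.

Lemma integral_congr1 (d e : nat) (T p : R) (w : R -> R -> R)
  (X : R -> 'cV[R]_d) (XX : R -> R -> 'M[R]_d)
  (Ht Kt : R -> 'M[R]_(e, d)) (Ht' Kt' : R -> 'I_d -> 'M[R]_(e, d))
  (Z : R -> 'cV[R]_e) (ZZ : R -> R -> 'M[R]_e) :
  (forall t, 0 <= t <= T -> Ht t = Kt t /\ forall a, Ht' t a = Kt' t a) ->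
  is_rough_integral T p w X XX Ht Ht' Z ZZ ->
  is_rough_integral T p w X XX Kt Kt' Z ZZ.
Proof.
move=> hE [rp z0 hr ho]; split => //.
  move=> s t hst eps e0; have [δ δ0 hδ] := hr s t hst eps e0.
  exists δ => // l pl ml.
  have := hδ l pl ml.
  case: pl => pth lst.
  have s0 : 0 <= s by case: hst.
  have lT : last s l <= T by rewrite lst; case: hst => _ [].
  suff -> : riemann_sum (rough_germ X XX Kt Kt') s l =
            riemann_sum (rough_germ X XX Ht Ht') s l by [].
  have gg : forall u v, 0 <= u <= T ->
      rough_germ X XX Kt Kt' u v = rough_germ X XX Ht Ht' u v.
    move=> u v hu.
    have [h1 h2] := hE u hu; rewrite /rough_germ h1; congr (_ + _).
    by apply: eq_bigr => a _; rewrite h2.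
  exact: (rs_eq gg s0 pth lT).
move=> eps e0; have [δ δ0 hδ] := ho eps e0; exists δ => // s t hst hd.
by have [<- _] := hE s (simp_l hst); exact: hδ.
Qed.

End Ana.

Unset Implicit Arguments.

Theorem mainTheorem10 (R : realType) (d e : nat) (T p : R)
  (w : R -> R -> R) (M A : set 'cV[R]_d) (Pi : 'cV[R]_d -> 'cV[R]_d)
  (X : R -> 'cV[R]_d) (XX : R -> R -> 'M[R]_d) :
  0 <= T -> 1 <= p -> p < 3 -> control T w ->
  embedded_submanifold M -> nearest_point_projection M A Pi ->
  manifold_rough_path T p w M Pi X XX ->
  (* (1) *)
  (forall (H : R -> 'M[R]_(e, d)) (H' : R -> 'I_d -> 'M[R]_(e, d)),
     controlled T p w X H H' ->
     (forall t, 0 <= t <= T ->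
        H t = leibnizQ_trace Pi X H t /\
        forall a, H' t a = leibnizQ_deriv Pi X H H' t a) ->
     forall (Z : R -> 'cV[R]_e) (ZZ : R -> R -> 'M[R]_e),
       is_constrained_rough_integral T p w Pi X XX H H' Z ZZ <->
       ((forall t, 0 <= t <= T -> Z t = 0) /\
        (forall s t, in_simplex T s t -> ZZ s t = 0))) /\
  (* (2) *)
  (forall (H K : R -> 'M[R]_(e, d)) (H' K' : R -> 'I_d -> 'M[R]_(e, d)),
     controlled T p w X H H' -> controlled T p w X K K' ->
     (forall t, 0 <= t <= T ->
        K t - H t = leibnizQ_trace Pi X (fun u => K u - H u) t /\
        forall a, K' t a - H' t a =
          leibnizQ_deriv Pi X (fun u => K u - H u) (fun u b => K' u b - H' u b) t a) ->
     forall (Z : R -> 'cV[R]_e) (ZZ : R -> R -> 'M[R]_e),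
       is_constrained_rough_integral T p w Pi X XX H H' Z ZZ <->
       is_constrained_rough_integral T p w Pi X XX K K' Z ZZ).
Proof.
move=> T0 p1 p3 wc Msub [oA MA sm hnear] [rpX XM pushX].
have eg0 : forall v : 'cV[R]_d, 0 <= eucl2 v.
  by move=> v; apply: sumr_ge0 => i _; exact: sqr_ge0.
have e00 : forall v : 'cV[R]_d, eucl2 (v - v) = 0.
  by move=> v; rewrite subrr /eucl2 big1 // => i _; rewrite mxE expr2 mul0r.
have fixM : forall y, M y -> Pi y = y.
  move=> y My; have [_ le uq] := hnear y (MA y My).
  have h0 : eucl2 (y - Pi y) = 0.
    apply/eqP; rewrite eq_le eg0 andbT; have := le y My; rewrite e00 //.
  by apply/esym/uq => //; rewrite h0 e00.
have APi : forall x, A x -> A (Pi x).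
  by move=> x Ax; have [h _ _] := hnear x Ax; exact: MA.
have PP : forall x, A x -> Pi (Pi x) = Pi x.
  by move=> x Ax; have [h _ _] := hnear x Ax; exact: fixM.
have dPi : forall x, A x -> differentiable Pi x := (sm 2%N).1.
have dD : forall (a : 'I_d) x, A x ->
    differentiable (fun z => 'D_(evec R a) Pi z) x := fun a => ((sm 2%N).2 a).1.
have pull0 : forall (H : R -> 'M[R]_(e,d)) H' t, 0 <= t <= T ->
    H t = leibnizQ_trace Pi X H t ->
    (forall a, H' t a = leibnizQ_deriv Pi X H H' t a) ->
    pullback_trace Pi X H t = 0 /\ forall a, pullback_deriv Pi X H H' t a = 0.
  move=> H H' t ht h1 h2.
  have Ay : A (X t) := MA _ (XM t ht).
  have Py := fixM _ (XM t ht).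
  have g1 := G1 oA dPi APi PP Ay Py.
  have g2 := fun a b c => G2 oA dPi dD APi PP a b c Ay Py.
  have h1' : H t = H t *m (1%:M - DPi Pi (X t)) := h1.
  have h2' : forall a, H' t a = H' t a *m (1%:M - DPi Pi (X t)) +
      H t *m (\matrix_(c, b) - (D2Pi Pi (X t) a b) c 0) := h2.
  split; first exact: (HP0 h1').
  by move=> a; exact: (alg_deriv g1 g2 h1' h2' a).
split.
  move=> H H' _ hc Z ZZ; rewrite /is_constrained_rough_integral.
  apply: integral_zero => // t ht; have [h1 h2] := hc t ht; exact: pull0.
move=> H K H' K' _ _ hc Z ZZ; rewrite /is_constrained_rough_integral.
have hE : forall t, 0 <= t <= T ->
    pullback_trace Pi X H t = pullback_trace Pi X K t /\
    forall a, pullback_deriv Pi X H H' t a = pullback_deriv Pi X K K' t a.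
  move=> t ht; have [h1 h2] := hc t ht; have [z1 z2] := pull0 _ _ t ht h1 h2.
  split.
    move: z1; rewrite /pullback_trace mulmxBl => /eqP; rewrite subr_eq0 => /eqP.
    by move=> ->.
  move=> a; apply/matrixP => k b.
  have := congr1 (fun M : 'M[R]_(e,d) => M k b) (z2 a); rewrite /pullback_deriv !mxE.
  set P := DPi Pi (X t).
  have e1 : \sum_(i < d) \sum_(j < d) (K' t i - H' t i) k j * P i a * P j b =
      \sum_(i < d) \sum_(j < d) K' t i k j * P i a * P j b -
      \sum_(i < d) \sum_(j < d) H' t i k j * P i a * P j b.
    rewrite -sumrB; apply: eq_bigr => i _; rewrite -sumrB; apply: eq_bigr => j _.
    by rewrite !mxE !mulrBl.
  have e2 : \sum_(c < d) (K t - H t) k c * (D2Pi Pi (X t) a b) c 0 =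
      \sum_(c < d) K t k c * (D2Pi Pi (X t) a b) c 0 -
      \sum_(c < d) H t k c * (D2Pi Pi (X t) a b) c 0.
    by rewrite -sumrB; apply: eq_bigr => c _; rewrite !mxE mulrBl.
  rewrite e1 e2 => z; lra.
split; apply: integral_congr1 => t ht; have [h1 h2] := hE t ht; split => //.
Qed.
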